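(* The $K$-bilinear map $\psi:\mathfrak{stl}_3(R)\times\mathfrak{stl}_3(R)\to\mathcal U$ defined below is a Leibniz $2$-cocycle, i.e. $\psi(x,[y,z])+\psi([x,z],y)-\psi([x,y],z)=0$ for all $x,y,z\in\mathfrak{stl}_3(R)$.
   Context: $K$ unital commutative ring, $R$ unital associative $K$-algebra, free as $K$-module with basis containing $1$. Leibniz algebra: $K$-bilinear bracket with $[x,[y,z]]=[[x,y],z]-[[x,z],y]$. $\mathfrak{stl}_3(R)$: Leibniz algebra over $K$ generated by $X_{ij}(a)$, $a\in R$, $1\le i\ne j\le 3$, subject to $K$-linearity in $a$, $[X_{ij}(a),X_{jk}(b)]=X_{ik}(ab)$ and $[X_{ij}(a),X_{ki}(b)]=-X_{kj}(ba)$ for distinct $i,j,k$, $[X_{ij}(a),X_{kl}(b)]=0$ for $j\ne k$, $i\ne l$. $H$ is the $K$-span of all $[X_{ij}(a),X_{ji}(b)]$; $\mathfrak{stl}_3(R)=H\oplus\bigoplus_{i\ne j}X_{ij}(R)$ with $a\mapsto X_{ij}(a)$ injective. $R_3=R/\mathcal I_3$ with $\mathcal I_3=3R+R[R,R]$ the ideal generated by all $3a$ and $ab-ba$; $\bar a$ the class of $a$. $\mathcal U=R_3^6$ with coordinates indexed by $\{1,2,3,-1,-2,-3\}$; $\bar a^{(m)}$ denotes the element with coordinate $\bar a$ at index $m$ and $0$ elsewhere. For $m\ne n$ in $\{1,2,3\}$, $\mathrm{sign}(m,n)=1$ if $m<n$ and $-1$ if $m>n$. $\psi$ is the $K$-bilinear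 map with $\psi(X_{ij}(a),X_{ik}(b))=\mathrm{sign}(j,k)\,(\overline{ab})^{(i)}$ and $\psi(X_{ij}(a),X_{kj}(b))=\mathrm{sign}(i,k)\,(\overline{ab})^{(-j)}$ for $a,b\in R$ and distinct $i,j,k$, $\psi=0$ on all other pairs $X_{ij}(a),X_{kl}(b)$, and $\psi=0$ whenever an argument lies in $H$. *)

(* Defs.v *)
From HB Require Import structures.
From mathcomp Require Import all_boot all_order all_algebra.
Set Implicit Arguments. Unset Strict Implicit. Unset Printing Implicit Defensive.
Import GRing.Theory.
Local Open Scope ring_scope.

(* Indices 1,2,3 of the paper are represented by the ordinals 0,1,2 of 'I_3
   (order-preservingly). *)

Section Defs.
Variable K : comNzRingType.

Definition free_with_basis_containing_one (R : algType K) : Prop :=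
  exists (I : eqType) (b : I -> R) (i1 : I),
    b i1 = 1 /\
    (forall r : R, exists s : seq (K * I), r = \sum_(t <- s) t.1 *: b t.2) /\
    (forall (s : seq I) (c : I -> K), uniq s ->
        \sum_(i <- s) c i *: b i = 0 -> forall i, i \in s -> c i = 0).

Inductive I3 (R : algType K) : R -> Prop :=
  | I3_three a : I3 (a *+ 3)
  | I3_comm a b : I3 (a * b - b * a)
  | I3_zero : I3 0
  | I3_add x y : I3 x -> I3 y -> I3 (x + y)
  | I3_mull r x : I3 x -> I3 (r * x)
  | I3_mulr r x : I3 x -> I3 (x * r).

Definition leibniz (L : lmodType K) (br : L -> L -> L) : Prop :=
  [/\ (forall x (k : K) u v, br x (k *: u + v) = k *: br x u + br x v),
      (forall y (k : K) u v, br (k *: u + v) y = k *: br u y + br v y) &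
      (forall x y z, br x (br y z) = br (br x y) z - br (br x z) y)].

Definition stl3_relations (R : algType K) (L : lmodType K) (br : L -> L -> L)
    (X : 'I_3 -> 'I_3 -> R -> L) : Prop :=
  [/\ (forall i j, i != j -> forall (k : K) a b,
          X i j (k *: a + b) = k *: X i j a + X i j b),
      (forall i j k, i != j -> j != k -> i != k -> forall a b,
          br (X i j a) (X j k b) = X i k (a * b)),
      (forall i j k, i != j -> j != k -> i != k -> forall a b,
          br (X i j a) (X k i b) = - X k j (b * a)) &
      (forall i j k l, i != j -> k != l -> j != k -> i != l -> forall a b,
          br (X i j a) (X k l b) = 0)].

(* (L, br, X) is stl_3(R): the Leibniz algebra over K generated by the X_ij(a)
   subject to the relations above (universal property of the presentation). *)
Definition is_stl3 (R : algType K) (L : lmodType K) (br : L -> L -> L)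
    (X : 'I_3 -> 'I_3 -> R -> L) : Prop :=
  [/\ leibniz br, stl3_relations br X &
      forall (L' : lmodType K) (br' : L' -> L' -> L')
             (Y : 'I_3 -> 'I_3 -> R -> L'),
        leibniz br' -> stl3_relations br' Y ->
        exists f : L -> L',
          [/\ (forall (k : K) u v, f (k *: u + v) = k *: f u + f v),
              (forall x y, f (br x y) = br' (f x) (f y)),
              (forall i j a, i != j -> f (X i j a) = Y i j a) &
              (forall g : L -> L',
                 (forall (k : K) u v, g (k *: u + v) = k *: g u + g v) ->
                 (forall x y, g (br x y) = br' (g x) (g y)) ->
                 (forall i j a, i != j -> g (X i j a) = Y i j a) ->
                 forall x, g x = f x)]].

Inductive inH (R : algType K) (L : lmodType K) (br : L -> L -> L)
    (X : 'I_3 -> 'I_3 -> R -> L) : L -> Prop :=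
  | inH_gen i j a b : i != j -> inH br X (br (X i j a) (X j i b))
  | inH_zero : inH br X 0
  | inH_add x y : inH br X x -> inH br X y -> inH br X (x + y)
  | inH_scale (k : K) x : inH br X x -> inH br X (k *: x).

Definition stl3_decomposition (R : algType K) (L : lmodType K)
    (br : L -> L -> L) (X : 'I_3 -> 'I_3 -> R -> L) : Prop :=
  (forall x : L, exists (h : L) (a : 'I_3 -> 'I_3 -> R),
      inH br X h /\ x = h + \sum_(i < 3) \sum_(j < 3 | i != j) X i j (a i j)) /\
  (forall (h : L) (a : 'I_3 -> 'I_3 -> R), inH br X h ->
      h + \sum_(i < 3) \sum_(j < 3 | i != j) X i j (a i j) = 0 ->
      h = 0 /\ forall i j, i != j -> a i j = 0).

(* (R3, bar) is R_3 = R / I_3 with the canonical projection a |-> \bar a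
   (as K-modules: bar is K-linear, surjective, with kernel exactly I_3). *)
Definition is_R3_quotient (R : algType K) (R3 : lmodType K) (bar : R -> R3)
    : Prop :=
  [/\ (forall (k : K) a b, bar (k *: a + b) = k *: bar a + bar b),
      (forall u : R3, exists a, bar a = u) &
      (forall a, bar a = 0 <-> I3 a)].
End Defs.

(* Index set {1,2,3,-1,-2,-3} of U = R_3^6: inl i stands for i+1 and
   inr i for -(i+1), for i : 'I_3. *)
Definition U_index := ('I_3 + 'I_3)%type.

Definition ucoord (M : zmodType) (m : U_index) (u : M) : {ffun U_index -> M} :=
  [ffun n => if n == m then u else 0].

Definition signed (M : zmodType) (m n : 'I_3) (u : M) : M :=
  if (m < n)%N then u else - u.

Definition psi_gen (R : nzRingType) (M : zmodType) (bar : R -> M)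
    (i j k l : 'I_3) (a b : R) : {ffun U_index -> M} :=
  if (i == k) && (j != l) then signed j l (ucoord (inl i) (bar (a * b)))
  else if (j == l) && (i != k) then signed i k (ucoord (inr j) (bar (a * b)))
  else 0.

(* Main.v *)
Require Import Defs.
From HB Require Import structures.
From mathcomp Require Import all_boot all_order all_algebra.
Import GRing.Theory.
Local Open Scope ring_scope.
Set Implicit Arguments. Unset Strict Implicit. Unset Printing Implicit Defensive.

Notation o0 := (@Ordinal 3 0 isT).
Notation o1 := (@Ordinal 3 1 isT).
Notation o2 := (@Ordinal 3 2 isT).
Lemma ord3 (i : 'I_3) : i = o0 \/ i = o1 \/ i = o2.
Proof. case: i => [[|[|[|n]]] p]; rewrite ?(bool_irrelevance p isT); auto. by []. Qed.

Section Lin.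
Variables (K : comNzRingType) (U V : lmodType K) (f : U -> V).
Hypothesis Hf : forall (k : K) u v, f (k *: u + v) = k *: f u + f v.
Lemma lin0 : f 0 = 0.
Proof. have := Hf 1 0 0; rewrite !scale1r addr0 => H. by apply: (@addrI _ (f 0)); rewrite addr0 -H. Qed.
Lemma linD u v : f (u + v) = f u + f v.
Proof. by have := Hf 1 u v; rewrite !scale1r. Qed.
Lemma linZ k u : f (k *: u) = k *: f u.
Proof. by rewrite -[k *: u]addr0 Hf lin0 addr0. Qed.
Lemma linN u : f (- u) = - f u.
Proof. by rewrite -scaleN1r linZ scaleN1r. Qed.
Lemma linB u v : f (u - v) = f u - f v.
Proof. by rewrite linD linN. Qed.
End Lin.

Section Main.
Variables (K : comNzRingType) (R : algType K)
    (L : lmodType K) (br : L -> L -> L) (X : 'I_3 -> 'I_3 -> R -> L)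
    (R3 : lmodType K) (bar : R -> R3)
    (psi : L -> L -> {ffun U_index -> R3}).
Hypotheses (Hl : leibniz br) (Hr : stl3_relations br X)
  (Hd : stl3_decomposition br X) (Hb : is_R3_quotient bar)
  (Pr : forall x (k : K) u v, psi x (k *: u + v) = k *: psi x u + psi x v)
  (Pl : forall y (k : K) u v, psi (k *: u + v) y = k *: psi u y + psi v y)
  (Pg : forall i j k l a b, i != j -> k != l ->
      psi (X i j a) (X k l b) = psi_gen bar i j k l a b)
  (PH1 : forall h y, inH br X h -> psi h y = 0)
  (PH2 : forall x h, inH br X h -> psi x h = 0).

Lemma brlinr x : forall (k : K) u v, br x (k *: u + v) = k *: br x u + br x v.
Proof. by case: Hl. Qed.
Lemma brlinl y : forall (k : K) u v, br (k *: u + v) y = k *: br u y + br v y.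
Proof. by case: Hl => _ H _; apply: H. Qed.
Lemma leib x y z : br x (br y z) = br (br x y) z - br (br x z) y.
Proof. by case: Hl. Qed.
Lemma brDr x u v : br x (u + v) = br x u + br x v. Proof. exact: (linD (brlinr x)). Qed.
Lemma brDl y u v : br (u + v) y = br u y + br v y. Proof. exact: (linD (brlinl y)). Qed.
Lemma brNr x u : br x (- u) = - br x u. Proof. exact: (linN (brlinr x)). Qed.
Lemma brNl y u : br (- u) y = - br u y. Proof. exact: (linN (brlinl y)). Qed.
Lemma brZr x k u : br x (k *: u) = k *: br x u. Proof. exact: (linZ (brlinr x)). Qed.
Lemma brZl y k u : br (k *: u) y = k *: br u y. Proof. exact: (linZ (brlinl y)). Qed.
Lemma br0r x : br x 0 = 0. Proof. exact: (lin0 (brlinr x)). Qed.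
Lemma br0l y : br 0 y = 0. Proof. exact: (lin0 (brlinl y)). Qed.

Lemma psiDr x u v : psi x (u + v) = psi x u + psi x v. Proof. exact: (linD (Pr x)). Qed.
Lemma psiDl y u v : psi (u + v) y = psi u y + psi v y. Proof. exact: (linD (Pl y)). Qed.
Lemma psiNr x u : psi x (- u) = - psi x u. Proof. exact: (linN (Pr x)). Qed.
Lemma psiNl y u : psi (- u) y = - psi u y. Proof. exact: (linN (Pl y)). Qed.
Lemma psiZr x k u : psi x (k *: u) = k *: psi x u. Proof. exact: (linZ (Pr x)). Qed.
Lemma psiZl y k u : psi (k *: u) y = k *: psi u y. Proof. exact: (linZ (Pl y)). Qed.
Lemma psi0r x : psi x 0 = 0. Proof. exact: (lin0 (Pr x)). Qed.
Lemma psi0l y : psi 0 y = 0. Proof. exact: (lin0 (Pl y)). Qed.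

Lemma barlin : forall (k : K) a b, bar (k *: a + b) = k *: bar a + bar b.
Proof. by case: Hb. Qed.
Lemma barD a b : bar (a + b) = bar a + bar b. Proof. exact: (linD barlin). Qed.
Lemma barN a : bar (- a) = - bar a. Proof. exact: (linN barlin). Qed.
Lemma barB a b : bar (a - b) = bar a - bar b. Proof. exact: (linB barlin). Qed.
Lemma bar0 : bar 0 = 0. Proof. exact: (lin0 barlin). Qed.
Lemma barI a : I3 a -> bar a = 0. Proof. by case: Hb => _ _ H /H. Qed.
Lemma barC x y : bar (x * y) = bar (y * x).
Proof. by apply/eqP; rewrite -subr_eq0 -barB; apply/eqP; apply: barI; apply: I3_comm. Qed.
Lemma barAC p x y : bar (p * x * y) = bar (p * y * x).
Proof.
apply/eqP; rewrite -subr_eq0 -barB -!mulrA -mulrBr; apply/eqP; apply: barI.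
by apply: I3_mull; apply: I3_comm.
Qed.
Lemma bar3 a : bar a *+ 3 = 0.
Proof. by move: (barI (I3_three a)); rewrite !mulrS !mulr0n !addr0 !barD. Qed.
Lemma Xlin i j : i != j -> forall (k : K) a b, X i j (k *: a + b) = k *: X i j a + X i j b.
Proof. by case: Hr => H _ _ _; apply: H. Qed.
Lemma XD i j a b : i != j -> X i j (a + b) = X i j a + X i j b.
Proof. move=> h; exact: (linD (Xlin h)). Qed.
Lemma XN i j a : i != j -> X i j (- a) = - X i j a.
Proof. move=> h; exact: (linN (Xlin h)). Qed.
Lemma XB i j a b : i != j -> X i j (a - b) = X i j a - X i j b.
Proof. move=> h; exact: (linB (Xlin h)). Qed.
Lemma X0 i j : i != j -> X i j 0 = 0.
Proof. move=> h; exact: (lin0 (Xlin h)). Qed.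

Definition brg i j k l a b :=
  if (j == k) && (i != l) then X i l (a * b)
  else if (i == l) && (j != k) then - X k j (b * a)
  else if (j != k) && (i != l) then 0
  else br (X i j a) (X k l b).

Lemma brgE i j k l a b : i != j -> k != l -> br (X i j a) (X k l b) = brg i j k l a b.
Proof.
case: Hr => _ Q2 Q3 Q4 nij nkl; rewrite /brg.
case: (eqVneq j k) => [ejk|njk]; case: (eqVneq i l) => [eil|nil] //=.
- by subst; apply: Q2.
- by subst; apply: Q3; rewrite // eq_sym.
- by apply: Q4.
Qed.
Definition cf x y z := psi x (br y z) + psi (br x z) y - psi (br x y) z.
Lemma psiHr x i j a b : i != j -> psi x (br (X i j a) (X j i b)) = 0.
Proof. by move=> h; apply: PH2; apply: inH_gen. Qed.
Lemma psiHl y i j a b : i != j -> psi (br (X i j a) (X j i b)) y = 0.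
Proof. by move=> h; apply: PH1; apply: inH_gen. Qed.
Lemma zfin (M : zmodType) (u : M) (n : int) : u *+ 3 = 0 -> (n %% 3)%Z == 0 -> u *~ n = 0.
Proof.
move=> h3 /eqP hn; rewrite (divz_eq n 3) hn addr0 mulrzA.
rewrite mulrzAC. have -> : u *~ 3 = u *+ 3 by []. by rewrite h3 mul0rz.
Qed.
Lemma barE a b : a - b = 0 -> bar a = bar b.
Proof. by move=> h; apply/eqP; rewrite -subr_eq0 -barB h bar0. Qed.
Lemma sw1 x y z : bar (x * y * z) = bar (y * x * z).
Proof.
apply/eqP; rewrite -subr_eq0 -barB -mulrBl; apply/eqP; apply: barI.
by apply: I3_mulr; apply: I3_comm.
Qed.
Lemma sw41 x y z w : bar (x * y * z * w) = bar (y * x * z * w).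
Proof.
apply/eqP; rewrite -subr_eq0 -barB -!mulrBl; apply/eqP; apply: barI.
by apply: I3_mulr; apply: I3_mulr; apply: I3_comm.
Qed.
Lemma sw42 p x y w : bar (p * x * y * w) = bar (p * y * x * w).
Proof.
apply/eqP; rewrite -subr_eq0 -barB; apply/eqP; apply: barI.
have -> : p*x*y*w - p*y*x*w = p*(x*y - y*x)*w by rewrite mulrBr mulrBl !mulrA.
by apply: I3_mulr; apply: I3_mull; apply: I3_comm.
Qed.
Ltac ocase i := case: (ord3 i) => [->|[->|->]].
Ltac sortbar3 a b c := repeat progress rewrite ?(sw1 b a) ?(sw1 c a) ?(sw1 c b)
   ?(barAC _ b a) ?(barAC _ c a) ?(barAC _ c b).
Ltac zfinish :=
  repeat progress rewrite ?addr0 ?add0r ?subr0 ?sub0r ?oppr0 ?opprK ?opprD; try done;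
  match goal with |- context [bar ?t] =>
    let u := fresh "u" in set u := bar t;
    rewrite -[u]mulr1z -?mulrNz -?mulrzDr; apply: zfin; [exact: bar3 | by vm_compute] end.
Ltac coords := let q := fresh "q" in apply/ffunP; case; intro q; ocase q; rewrite !ffunE /=.

Lemma GGG i j k l m n a b c : i != j -> k != l -> m != n ->
  cf (X i j a) (X k l b) (X m n c) = 0.
Proof.
have Q1 : bar (a * c * b) = bar (a * b * c) by sortbar3 a b c.
have Q2 : bar (b * a * c) = bar (a * b * c) by sortbar3 a b c.
have Q3 : bar (b * c * a) = bar (a * b * c) by sortbar3 a b c.
have Q4 : bar (c * a * b) = bar (a * b * c) by sortbar3 a b c.
have Q5 : bar (c * b * a) = bar (a * b * c) by sortbar3 a b c.
ocase i; ocase j; ocase k; ocase l; ocase m; ocase n; try by [].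
all: move=> _ _ _.
all: rewrite /cf !brgE // /brg /=.
all: rewrite ?psiHr ?psiHl // ?psiNr ?psiNl ?psi0r ?psi0l ?Pg // /psi_gen /signed /=.
all: coords.
all: rewrite ?mulrA; sortbar3 a b c.
all: zfinish.
Qed.
Lemma leib2 x y z : br (br x y) z = br x (br y z) + br (br x z) y.
Proof. by rewrite leib subrK. Qed.
Definition hv i j a b (k l : 'I_3) c : R :=
  (if k == i then a*b*c else 0) - (if k == j then b*a*c else 0)
  - (if l == i then c*a*b else 0) + (if l == j then c*b*a else 0).
Ltac Xnorm := rewrite ?mulrA; repeat progress rewrite ?addr0 ?add0r ?subr0 ?sub0r ?oppr0 ?opprK ?opprD;
   rewrite ?XD ?XN ?XB ?X0 //; rewrite ?mulrN ?mulNr ?mulrA ?XN ?opprK //.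
Lemma brhX_gen i j k l a b c : i != j -> k != l -> ~~((k == i) && (l == j)) ->
  ~~((k == j) && (l == i)) ->
  br (br (X i j a) (X j i b)) (X k l c) = X k l (hv i j a b k l c).
Proof.
ocase i; ocase j; ocase k; ocase l; try by [].
all: move=> _ _ _ _.
all: rewrite leib2 !brgE // /brg /=.
all: rewrite ?brNr ?brNl ?br0r ?br0l ?brgE // /brg /hv /=.
all: Xnorm.
Qed.
Ltac Xnorm2 := rewrite ?mulr1 ?mul1r; Xnorm.
Ltac sp m := match goal with |- br (br (X ?i ?j ?a) (X ?j ?i ?b)) (X ?k ?l ?c) = _ =>
  let E := fresh "E" in
  assert (E : br (X k m c) (X m l 1) = X k l c) by (rewrite brgE // /brg /= mulr1; done);
  rewrite -E leib !brhX_gen // !brgE // /brg /hv /=; Xnorm2 end.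
Lemma brhX i j k l a b c : i != j -> k != l ->
  br (br (X i j a) (X j i b)) (X k l c) = X k l (hv i j a b k l c).
Proof.
ocase i; ocase j; ocase k; ocase l; try by []; move=> _ _.
all: try (apply: brhX_gen; by []).
all: first [ sp (@Ordinal 3 0 isT) | sp (@Ordinal 3 1 isT) | sp (@Ordinal 3 2 isT) ].
Qed.
Lemma brXh i j k l a b c : i != j -> k != l ->
  br (X k l c) (br (X i j a) (X j i b)) = - X k l (hv i j a b k l c).
Proof.
ocase i; ocase j; ocase k; ocase l; try by []; move=> _ _.
all: rewrite leib !brgE // /brg /=.
all: rewrite ?brNl ?brNr ?br0l ?br0r ?brhX // ?brgE // /brg /hv /=.
all: Xnorm2.
all: by rewrite ?opprD ?opprK addrC.
Qed.
Ltac sortbar4 a b c d := repeat progress rewrite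
   ?(sw41 b a) ?(sw41 c a) ?(sw41 d a) ?(sw41 c b) ?(sw41 d b) ?(sw41 d c)
   ?(sw42 _ b a) ?(sw42 _ c a) ?(sw42 _ d a) ?(sw42 _ c b) ?(sw42 _ d b) ?(sw42 _ d c)
   ?(barAC _ b a) ?(barAC _ c a) ?(barAC _ d a) ?(barAC _ c b) ?(barAC _ d b) ?(barAC _ d c).
Ltac expand := repeat progress rewrite ?mulrDl ?mulrDr ?mulrBl ?mulrBr ?mulNr ?mulrN
   ?mul0r ?mulr0 ?barD ?barB ?barN ?bar0 ?mulrA.

Lemma TGGf i j k l m n a b c d : i != j -> k != l -> m != n ->
  psi (X m n (hv i j a b m n d)) (X k l c) = psi (X k l (hv i j a b k l c)) (X m n d).
Proof.
have P1 : bar (a * b * d * c) = bar (a * b * c * d) by sortbar4 a b c d.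
have P2 : bar (a * c * b * d) = bar (a * b * c * d) by sortbar4 a b c d.
have P3 : bar (a * c * d * b) = bar (a * b * c * d) by sortbar4 a b c d.
have P4 : bar (a * d * b * c) = bar (a * b * c * d) by sortbar4 a b c d.
have P5 : bar (a * d * c * b) = bar (a * b * c * d) by sortbar4 a b c d.
have P6 : bar (b * a * c * d) = bar (a * b * c * d) by sortbar4 a b c d.
have P7 : bar (b * a * d * c) = bar (a * b * c * d) by sortbar4 a b c d.
have P8 : bar (b * c * a * d) = bar (a * b * c * d) by sortbar4 a b c d.
have P9 : bar (b * c * d * a) = bar (a * b * c * d) by sortbar4 a b c d.
have P10 : bar (b * d * a * c) = bar (a * b * c * d) by sortbar4 a b c d.
have P11 : bar (b * d * c * a) = bar (a * b * c * d) by sortbar4 a b c d.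
have P12 : bar (c * a * b * d) = bar (a * b * c * d) by sortbar4 a b c d.
have P13 : bar (c * a * d * b) = bar (a * b * c * d) by sortbar4 a b c d.
have P14 : bar (c * b * a * d) = bar (a * b * c * d) by sortbar4 a b c d.
have P15 : bar (c * b * d * a) = bar (a * b * c * d) by sortbar4 a b c d.
have P16 : bar (c * d * a * b) = bar (a * b * c * d) by sortbar4 a b c d.
have P17 : bar (c * d * b * a) = bar (a * b * c * d) by sortbar4 a b c d.
have P18 : bar (d * a * b * c) = bar (a * b * c * d) by sortbar4 a b c d.
have P19 : bar (d * a * c * b) = bar (a * b * c * d) by sortbar4 a b c d.
have P20 : bar (d * b * a * c) = bar (a * b * c * d) by sortbar4 a b c d.
have P21 : bar (d * b * c * a) = bar (a * b * c * d) by sortbar4 a b c d.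
have P22 : bar (d * c * a * b) = bar (a * b * c * d) by sortbar4 a b c d.
have P23 : bar (d * c * b * a) = bar (a * b * c * d) by sortbar4 a b c d.
ocase i; ocase j; ocase k; ocase l; ocase m; ocase n; try by [].
all: move=> _ _ _.
all: rewrite ?Pg // /hv /psi_gen /signed /=.
all: try (apply/eqP; rewrite -subr_eq0; apply/eqP).
all: repeat progress rewrite ?addr0 ?add0r ?subr0 ?sub0r ?oppr0.
all: try done.
all: coords.
all: expand.
all: rewrite ?P1 ?P2 ?P3 ?P4 ?P5 ?P6 ?P7 ?P8 ?P9 ?P10 ?P11 ?P12 ?P13 ?P14 ?P15 ?P16 ?P17 ?P18 ?P19 ?P20 ?P21 ?P22 ?P23.
all: zfinish.
Qed.
Lemma psi_anti k l m n p q : k != l -> m != n ->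
  psi (X k l p) (X m n q) = - psi (X m n q) (X k l p).
Proof.
ocase k; ocase l; ocase m; ocase n; try by []; move=> _ _.
all: rewrite !Pg // /psi_gen /signed /= ?(barC q p) ?opprK ?oppr0 //.
Qed.
Lemma TGG i j k l m n a b c d : i != j -> k != l -> m != n ->
  cf (br (X i j a) (X j i b)) (X k l c) (X m n d) = 0.
Proof. by move=> *; rewrite /cf psiHl // !brhX // TGGf // add0r subrr. Qed.
Lemma GTG i j k l m n a b c d : i != j -> k != l -> m != n ->
  cf (X k l c) (br (X i j a) (X j i b)) (X m n d) = 0.
Proof.
move=> *; rewrite /cf psiHr // brhX // brXh // psiNl [psi (X k l c) _]psi_anti // TGGf //.
by rewrite addr0 opprK addNr.
Qed.
Lemma GGT i j k l m n a b c d : i != j -> k != l -> m != n ->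
  cf (X k l c) (X m n d) (br (X i j a) (X j i b)) = 0.
Proof.
move=> *; rewrite /cf psiHr // !brXh // psiNl psiNr [psi (X k l c) _]psi_anti // TGGf //.
by rewrite opprK subr0 subrr.
Qed.
Lemma HH i j k l a b c d : i != j -> k != l ->
  inH br X (br (br (X i j a) (X j i b)) (br (X k l c) (X l k d))).
Proof.
move=> nij nkl; have nlk : l != k by rewrite eq_sym.
rewrite leib !brhX //; apply: inH_add; first exact: inH_gen.
by rewrite -scaleN1r; apply: inH_scale; apply: inH_gen.
Qed.
Lemma TTT i j k l m n a b c d e f : i != j -> k != l -> m != n ->
  cf (br (X i j a) (X j i b)) (br (X k l c) (X l k d)) (br (X m n e) (X n m f)) = 0.
Proof. by move=> nij nkl nmn; rewrite /cf psiHl // psiHr // (PH1 _ (@HH i j k l a b c d nij nkl)) ?add0r ?addr0 ?subr0 ?oppr0. Qed.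
Lemma TTG i j k l m n a b c d e : i != j -> k != l -> m != n ->
  cf (br (X i j a) (X j i b)) (br (X k l c) (X l k d)) (X m n e) = 0.
Proof. by move=> nij nkl nmn; rewrite /cf psiHl // psiHr // (PH1 _ (@HH i j k l a b c d nij nkl)) ?add0r ?addr0 ?subr0 ?oppr0. Qed.
Lemma TGT i j k l m n a b c d e : i != j -> k != l -> m != n ->
  cf (br (X i j a) (X j i b)) (X k l c) (br (X m n d) (X n m e)) = 0.
Proof. by move=> nij nkl nmn; rewrite /cf psiHl // psiHr // (PH1 _ (@HH i j m n a b d e nij nmn)) ?add0r ?addr0 ?subr0 ?oppr0. Qed.
Lemma GTT i j k l m n a b c d e : i != j -> k != l -> m != n ->
  cf (X i j a) (br (X k l b) (X l k c)) (br (X m n d) (X n m e)) = 0.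
Proof. by move=> nij nkl nmn; rewrite /cf !psiHr // (PH2 _ (@HH k l m n b c d e nkl nmn)) ?add0r ?addr0 ?subr0 ?oppr0. Qed.

Lemma comb (M : zmodType) (a1 a2 b1 b2 c1 c2 : M) :
  (a1 + a2) + (b1 + b2) - (c1 + c2) = (a1 + b1 - c1) + (a2 + b2 - c2).
Proof. by rewrite opprD [a1 + a2 + _]addrACA [LHS]addrACA. Qed.
Lemma cflin1 y z : forall (k : K) u v, cf (k *: u + v) y z = k *: cf u y z + cf v y z.
Proof. by move=> k u v; rewrite /cf !brlinl !Pl !scalerDr !scalerN comb. Qed.
Lemma cflin2 x z : forall (k : K) u v, cf x (k *: u + v) z = k *: cf x u z + cf x v z.
Proof. by move=> k u v; rewrite /cf !brlinr !brlinl !Pl !Pr !scalerDr !scalerN comb. Qed.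
Lemma cflin3 x y : forall (k : K) u v, cf x y (k *: u + v) = k *: cf x y u + cf x y v.
Proof. by move=> k u v; rewrite /cf !brlinr !Pl !Pr !scalerDr !scalerN comb. Qed.

Lemma span (P : L -> Prop) : (forall x y, P x -> P y -> P (x + y)) ->
  (forall k x, P x -> P (k *: x)) -> P 0 ->
  (forall i j a b, i != j -> P (br (X i j a) (X j i b))) ->
  (forall i j a, i != j -> P (X i j a)) -> forall x, P x.
Proof.
move=> PD PZ P0 PH PX x; case: Hd => Hex _.
have [h [a [hH ->]]] := Hex x; apply: (PD).
  elim: hH => [i0 j0 a0 b0 nij|//|h1 h2 _ IH1 _ IH2|k h1 _ IH]; [exact: (PH) | exact: (PD) | exact: (PZ)].
apply: big_ind => // i _; apply: big_ind => // j; exact: PX.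
Qed.
Lemma cfD1 x1 x2 y z : cf (x1 + x2) y z = cf x1 y z + cf x2 y z.
Proof. exact: (linD (f := fun w => cf w y z) (cflin1 y z)). Qed.
Lemma cfD2 x y1 y2 z : cf x (y1 + y2) z = cf x y1 z + cf x y2 z.
Proof. exact: (linD (f := fun w => cf x w z) (cflin2 x z)). Qed.
Lemma cfD3 x y z1 z2 : cf x y (z1 + z2) = cf x y z1 + cf x y z2.
Proof. exact: (linD (f := fun w => cf x y w) (cflin3 x y)). Qed.
Lemma cfZ1 k x y z : cf (k *: x) y z = k *: cf x y z.
Proof. exact: (linZ (f := fun w => cf w y z) (cflin1 y z)). Qed.
Lemma cfZ2 k x y z : cf x (k *: y) z = k *: cf x y z.
Proof. exact: (linZ (f := fun w => cf x w z) (cflin2 x z)). Qed.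
Lemma cfZ3 k x y z : cf x y (k *: z) = k *: cf x y z.
Proof. exact: (linZ (f := fun w => cf x y w) (cflin3 x y)). Qed.
Lemma cf01 y z : cf 0 y z = 0.
Proof. exact: (lin0 (f := fun w => cf w y z) (cflin1 y z)). Qed.
Lemma cf02 x z : cf x 0 z = 0.
Proof. exact: (lin0 (f := fun w => cf x w z) (cflin2 x z)). Qed.
Lemma cf03 x y : cf x y 0 = 0.
Proof. exact: (lin0 (f := fun w => cf x y w) (cflin3 x y)). Qed.

Lemma cf0 x y z : cf x y z = 0.
Proof.
move: x y z; apply: (span (P := fun x => forall y z, cf x y z = 0)).
- by move=> ? ? H1 H2 y z; rewrite cfD1 H1 H2 addr0.
- by move=> ? ? H y z; rewrite cfZ1 H scaler0.
- by move=> y z; rewrite cf01.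
- move=> i j a b nij.
  apply: (span (P := fun y => forall z, cf (br (X i j a) (X j i b)) y z = 0)).
  + by move=> ? ? H1 H2 z; rewrite cfD2 H1 H2 addr0.
  + by move=> ? ? H z; rewrite cfZ2 H scaler0.
  + by move=> z; rewrite cf02.
  + move=> k l c d nkl.
    apply: (span (P := fun z => cf (br (X i j a) (X j i b)) (br (X k l c) (X l k d)) z = 0)).
    * by move=> ? ? H1 H2; rewrite cfD3 H1 H2 addr0.
    * by move=> ? ? H; rewrite cfZ3 H scaler0.
    * by rewrite cf03.
    * by move=> *; apply: TTT.
    * by move=> *; apply: TTG.
  + move=> k l c nkl.
    apply: (span (P := fun z => cf (br (X i j a) (X j i b)) (X k l c) z = 0)).
    * by move=> ? ? H1 H2; rewrite cfD3 H1 H2 addr0.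
    * by move=> ? ? H; rewrite cfZ3 H scaler0.
    * by rewrite cf03.
    * by move=> *; apply: TGT.
    * by move=> *; apply: TGG.
- move=> i j a nij.
  apply: (span (P := fun y => forall z, cf (X i j a) y z = 0)).
  + by move=> ? ? H1 H2 z; rewrite cfD2 H1 H2 addr0.
  + by move=> ? ? H z; rewrite cfZ2 H scaler0.
  + by move=> z; rewrite cf02.
  + move=> k l c d nkl.
    apply: (span (P := fun z => cf (X i j a) (br (X k l c) (X l k d)) z = 0)).
    * by move=> ? ? H1 H2; rewrite cfD3 H1 H2 addr0.
    * by move=> ? ? H; rewrite cfZ3 H scaler0.
    * by rewrite cf03.
    * by move=> *; apply: GTT.
    * by move=> *; apply: GTG.
  + move=> k l c nkl.
    apply: (span (P := fun z => cf (X i j a) (X k l c) z = 0)).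
    * by move=> ? ? H1 H2; rewrite cfD3 H1 H2 addr0.
    * by move=> ? ? H; rewrite cfZ3 H scaler0.
    * by rewrite cf03.
    * by move=> *; apply: GGT.
    * by move=> *; apply: GGG.
Qed.
End Main.

Unset Implicit Arguments.
Theorem lemma4p2 (K : comNzRingType) (R : algType K)
    (L : lmodType K) (br : L -> L -> L) (X : 'I_3 -> 'I_3 -> R -> L)
    (R3 : lmodType K) (bar : R -> R3)
    (psi : L -> L -> {ffun U_index -> R3}) :
  free_with_basis_containing_one R ->
  is_stl3 br X ->
  stl3_decomposition br X ->
  is_R3_quotient bar ->
  (* psi is K-bilinear *)
  (forall x (k : K) u v, psi x (k *: u + v) = k *: psi x u + psi x v) ->
  (forall y (k : K) u v, psi (k *: u + v) y = k *: psi u y + psi v y) ->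
  (* values on pairs of generators *)
  (forall i j k l a b, i != j -> k != l ->
      psi (X i j a) (X k l b) = psi_gen bar i j k l a b) ->
  (* psi vanishes whenever an argument lies in H *)
  (forall h y, inH br X h -> psi h y = 0) ->
  (forall x h, inH br X h -> psi x h = 0) ->
  forall x y z : L, psi x (br y z) + psi (br x z) y - psi (br x y) z = 0.
Proof.
move=> _ [Hl Hr _] Hd Hb Pr Pl Pg PH1 PH2 x y z.
exact: (cf0 Hl Hr Hd Hb Pr Pl Pg PH1 PH2).
Qed.
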